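(* Let $(V,\nu)$ be a gauged space. Let $V_1=V\oplus\mathbb{R}$ (algebraic direct sum) and define $\nu_1(x,\lambda)=\max\{\nu(x)+\lambda,0\}$. Then $(V_1,\nu_1)$ is a gauged space and $\nu_1(x,0)=\nu(x)$ for all $x\in V$; consequently $x\mapsto(x,0)$ is an isometric order embedding of $(V,\|\cdot\|_\nu,V_{+,\nu})$ into $(V_1,\|\cdot\|_{\nu_1},(V_1)_{+})$, where $(V_1)_+=\ker\overline{\nu_1}$. Moreover, $(V_1,(V_1)_+)$ is an Archimedean order unit space with order unit $e=(0,1)$, and $\nu_1(x,\lambda)=\inf\{t>0:(x,\lambda)\le t(0,1)\}$ for all $(x,\lambda)\in V_1$.
   Context: A gauge on a real vector space $V$ is a map $\nu:V\to[0,\infty)$ with $\nu(x+y)\le\nu(x)+\nu(y)$ and $\nu(tx)=t\nu(x)$ for all $x,y\in V$, $t>0$; its conjugate is $\overline{\nu}(x)=\nu(-x)$. A gauge is proper if for every $x\neq0$, $\nu(x)\neq0$ or $\overline{\nu}(x)\neq0$; a gauged space is a pair $(V,\nu)$ with $\nu$ a proper gauge. The induced norm is $\|x\|_\nu=\max\{\nu(x),\overline{\nu}(x)\}$ and the induced (proper, closed) cone is $V_{+,\nu}=\ker\overline{\nu}$; $x\le y$ means $y-x$ lies in the cone. An order embedding is an injective linear map $\phi$ with $\phi(x)\ge0$ iff $x\ge0$. An ordered vector space $(V,V_+)$ (real vector space with proper cone) is an order unit space with order unit $e$ if for each $a\in V$ there is $t>0$ with $-te\le a\le te$; the order unit is Archimedean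 if ($te+a\ge0$ for all $t>0$) implies $a\ge 0$; an Archimedean order unit (AOU) space is an order unit space with Archimedean order unit. *)

(* Defs.v *)
From HB Require Import structures.
From mathcomp Require Import all_boot all_order all_algebra.
Set Implicit Arguments. Unset Strict Implicit. Unset Printing Implicit Defensive.
Import Order.TTheory GRing.Theory Num.Theory.
Local Open Scope ring_scope.

Section Gauges.
Variables (R : realFieldType) (V : lmodType R).

Definition gauge (nu : V -> R) : Prop :=
  [/\ forall x, 0 <= nu x,
      forall x y, nu (x + y) <= nu x + nu y
    & forall (t : R) x, 0 < t -> nu (t *: x) = t * nu x].

Definition conj_gauge (nu : V -> R) : V -> R := fun x => nu (- x).

Definition proper_gauge (nu : V -> R) : Prop :=
  gauge nu /\ forall x, x != 0 -> nu x != 0 \/ conj_gauge nu x != 0.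

Definition gauge_norm (nu : V -> R) (x : V) : R := Num.max (nu x) (conj_gauge nu x).

Definition gcone (nu : V -> R) (x : V) : Prop := conj_gauge nu x = 0.

Definition cle (C : V -> Prop) (x y : V) : Prop := C (y - x).

Definition proper_cone (C : V -> Prop) : Prop :=
  [/\ forall x y, C x -> C y -> C (x + y),
      forall (t : R) x, 0 <= t -> C x -> C (t *: x)
    & forall x, C x -> C (- x) -> x = 0].

Definition order_unit_space (C : V -> Prop) (e : V) : Prop :=
  proper_cone C /\
  forall a, exists2 t : R, 0 < t & cle C (- (t *: e)) a /\ cle C a (t *: e).

Definition archimedean_unit (C : V -> Prop) (e : V) : Prop :=
  forall a, (forall t : R, 0 < t -> C (t *: e + a)) -> C a.

Definition AOU_space (C : V -> Prop) (e : V) : Prop :=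
  order_unit_space C e /\ archimedean_unit C e.

End Gauges.

Definition order_embedding (R : realFieldType) (V W : lmodType R)
  (CV : V -> Prop) (CW : W -> Prop) (phi : V -> W) : Prop :=
  [/\ forall (a : R) x y, phi (a *: x + y) = a *: phi x + phi y,
      injective phi
    & forall x, CW (phi x) <-> CV x].

Definition isometric (R : realFieldType) (V W : lmodType R)
  (nV : V -> R) (nW : W -> R) (phi : V -> W) : Prop :=
  forall x, nW (phi x) = nV x.

Definition is_inf (R : realFieldType) (S : R -> Prop) (m : R) : Prop :=
  (forall s, S s -> m <= s) /\
  (forall m', (forall s, S s -> m' <= s) -> m' <= m).

Definition ext_space (R : realFieldType) (V : lmodType R) : lmodType R :=
  (V * R^o)%type.

Definition nu1 (R : realFieldType) (V : lmodType R) (nu : V -> R)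
  : ext_space V -> R := fun p => Num.max (nu p.1 + p.2) 0.

(* Main.v *)
Require Import Defs.
From HB Require Import structures.
From mathcomp Require Import all_boot all_order all_algebra.
From mathcomp Require Import lra.
Import Order.TTheory GRing.Theory Num.Theory.
Local Open Scope ring_scope.

Lemma cone1 (R : realFieldType) (V : lmodType R) (nu : V -> R) (p : ext_space V) :
  gcone (nu1 nu) p <-> nu (- p.1) <= p.2.
Proof.
case: p => x l.
rewrite /gcone /conj_gauge /nu1 /=.
split; [move/max_idPr; rewrite subr_le0 | rewrite -subr_le0 => /max_idPr].
all: by [].
Qed.

Lemma gauge0 (R : realFieldType) (V : lmodType R) (nu : V -> R) :
  gauge nu -> nu 0 = 0.
Proof.
case=> _ _ hom.
have := hom 2 0 (ltr0Sn _ 1); rewrite scaler0 mulr_natl mulr2n => h.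
by apply: (@addrI _ (nu 0)); rewrite addr0 -h.
Qed.

Theorem proposition2p12 (R : realFieldType) (V : lmodType R) (nu : V -> R)
  (hnu : proper_gauge nu) :
  [/\ proper_gauge (nu1 nu),
      (forall x : V, nu1 nu (x, 0 : R^o) = nu x),
      order_embedding (gcone nu) (gcone (nu1 nu))
        (fun x : V => (x, 0 : R^o) : ext_space V) /\
      isometric (gauge_norm nu) (gauge_norm (nu1 nu))
        (fun x : V => (x, 0 : R^o) : ext_space V),
      AOU_space (gcone (nu1 nu)) ((0 : V), 1 : R^o) : Prop
    & forall p : ext_space V,
        is_inf (fun t : R => 0 < t /\
                  cle (gcone (nu1 nu)) p (t *: (((0 : V), 1 : R^o) : ext_space V)))
               (nu1 nu p)].
Proof.
case: hnu => hg nu_prop.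
have nu0 := @gauge0 R V nu hg.
case: hg => nu_ge0 nu_sub nu_hom.
have C1 := @cone1 R V nu.
have sc1 : forall t : R, (t *: (1 : R^o)) = t :> R by move=> t; exact: mulr1.
have mx0 : forall v, Num.max (nu v) 0 = nu v by move=> v; apply/max_idPl.
split.
- split; first split.
  + by move=> [x l]; rewrite /nu1 /= le_max lexx orbT.
  + move=> [x l] [y m]; rewrite /nu1 /=.
    have := nu_sub x y.
    case: (lerP (nu (x + y) + (l + m)) 0);
    case: (lerP (nu x + l) 0); case: (lerP (nu y + m) 0); lra.
  + move=> t [x l] ht; rewrite /nu1 /= nu_hom // -mulrDr maxr_pMr ?ltW //.
    by rewrite mulr0.
  + move=> [x l] nz.
    case: (eqVneq (nu1 nu (x, l)) 0) => [h|]; [right|by left].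
    apply/eqP => h2.
    move: h h2; rewrite /conj_gauge /nu1 /= => /max_idPr h /max_idPr h2.
    have g1 := nu_ge0 x; have g2 := nu_ge0 (- x).
    have e1 : nu x = 0 by lra.
    have e2 : nu (- x) = 0 by lra.
    case: (eqVneq x 0) => [x0|xnz].
      have l0 : l = 0 by lra.
      by move: nz; rewrite x0 l0 eqxx.
    by case: (nu_prop x xnz); rewrite /conj_gauge ?e1 ?e2 eqxx.
- by move=> x; rewrite /nu1 /= addr0.
- split.
  + split.
    * move=> a x y /=; congr (_, _); rewrite /=.
      by rewrite scaler0 addr0.
    * by move=> x y [].
    * move=> x; rewrite C1 /gcone /conj_gauge /=.
      split => [h|->//]; apply/eqP; rewrite eq_le h nu_ge0 //.
  + move=> x; rewrite /gauge_norm /conj_gauge /nu1 /= oppr0 !addr0.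
    by rewrite !mx0.
- split; first split; first split.
  + move=> p q /C1 h1 /C1 h2; apply/C1 => /=.
    rewrite opprD; apply: le_trans (nu_sub _ _) _; exact: lerD.
  + move=> t p ht /C1 h; apply/C1 => /=.
    have [->|tnz] := eqVneq t 0.
      by rewrite scale0r oppr0 nu0 scale0r.
    rewrite -scalerN nu_hom; first by change (t * nu (- p.1) <= t * p.2); rewrite ler_wpM2l.
    by rewrite lt_def tnz ht.
  + move=> [x l] /C1 /= h1 /C1 /= h2.
    rewrite opprK in h2.
    have g1 := nu_ge0 x; have g2 := nu_ge0 (- x).
    have e1 : nu x = 0 by lra.
    have e2 : nu (- x) = 0 by lra.
    have l0 : l = 0 by lra.
    case: (eqVneq x 0) => [x0|xnz].
      by rewrite x0 l0.
    by case: (nu_prop x xnz); rewrite /conj_gauge ?e1 ?e2 eqxx.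
  + move=> [x l]; exists (nu x + nu (- x) + `|l| + 1).
      have := nu_ge0 x; have := nu_ge0 (- x); have := normr_ge0 l; lra.
    have := nu_ge0 x; have := nu_ge0 (- x); have := ler_norm l.
    have := ler_norm (- l); rewrite normrN.
    split; apply/C1 => /=; rewrite ?scaler0 ?oppr0 ?subr0 ?sub0r ?opprK ?addr0 ?sc1; lra.
- move=> [x l] h; apply/C1 => /=.
  rewrite leNgt; apply/negP => hlt.
  have tpos : 0 < (nu (- x) - l) / 2 by lra.
  move: (h _ tpos) => /C1 /=.
  rewrite scaler0 add0r sc1; lra.
- move=> [x l]; split.
  + move=> s [hs /C1 /=]; rewrite scaler0 sub0r opprK sc1 => h.
    by rewrite /nu1 /= ge_max; apply/andP; split; lra.
  + move=> m' hm'; rewrite /nu1 /=.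
    set M := Num.max _ _.
    have hM1 : nu x + l <= M by rewrite le_max lexx.
    have hM2 : 0 <= M by rewrite le_max lexx orbT.
    rewrite leNgt; apply/negP => hlt.
    have := hm' ((m' + M) / 2); rewrite /=.
    suff : 0 < (m' + M) / 2 /\ cle (gcone (nu1 nu)) (x, l) (((m' + M) / 2) *: ((0 : V), 1 : R^o) : ext_space V).
      by move=> H /(_ H); lra.
    split; first lra.
    apply/C1 => /=; rewrite scaler0 sub0r opprK sc1; lra.
Qed.
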